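(* Let $V\in{}_B\mathrm{Rep}^A$ and $W\in{}_A\mathrm{Rep}^C$. Then there is a unitary (inner-product preserving, bijective) isomorphism of unitary DK-representations between ${}_V\mathrm{Ind}(W)$ and $\mathrm{Ind}^W(V)$, both equipped with the tensor product inner product on $V\odot W$.
   Context: $A$ is a CQG Hopf $*$-algebra: a complex Hopf algebra $(A,\Delta_A,\varepsilon_A,S_A)$ with an anti-linear involution making it a $*$-algebra with $\Delta_A$ a $*$-homomorphism, admitting a state $\Phi_A$ with $(\Phi_A\otimes\mathrm{id})\Delta_A(a)=\Phi_A(a)1=(\mathrm{id}\otimes\Phi_A)\Delta_A(a)$. Put $a^\dagger=S_A(a)^*$. $B\subseteq A$ is a unital right coideal $*$-subalgebra ($\Delta_A(B)\subseteq B\odot A$). Let $B_+=B\cap\ker\varepsilon_A$, $C=A/AB_+$ with quotient map $\pi_C$; $C$ is a coalgebra (comultiplication induced by $\Delta_A$), a left $A$-module via $a\cdot\pi_C(a')=\pi_C(aa')$, with anti-linear involution $\pi_C(a)^\dagger=\pi_C(a^\dagger)$. Sweedler notation is used. For $(X,Y)\in\{(B,A),(A,C),(B,C)\}$, ${}_X\mathrm{Mod}^Y$ is the category of left $X$-modules $V$ with a right $Y$-comodule structure $v\mapsto v_{(0)}\otimes v_{(1)}$ such that $(xv)_{(0)}\otimes(xv)_{(1)}=x_{(1)}v_{(0)}\otimes x_{(2)}v_{(1)}$. ${}_X\mathrm{Rep}^Y$ consists of those $V$ which are pre-Hilbert spaces with $\langle v,xw\rangle=\langle x^*v,w\rangle$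 and $\langle v,w_{(0)}\rangle w_{(1)}=\langle v_{(0)},w\rangle v_{(1)}^\dagger$ for all $v,w\in V$, $x\in X$. ${}_V\mathrm{Ind}(W)$: $V\odot W$ with $b(v\otimes w)=bv\otimes w$ and coaction $v\otimes w\mapsto v_{(0)}\otimes w_{(0)}\otimes v_{(1)}w_{(1)}$. $\mathrm{Ind}^W(V)$: $V\odot W$ with $b(v\otimes w)=b_{(1)}v\otimes b_{(2)}w$ and coaction $v\otimes w\mapsto v\otimes w_{(0)}\otimes w_{(1)}$. Both are in ${}_B\mathrm{Rep}^C$ with the tensor product inner product. *)

(* Defs.v *)
(* Algebraic tensor products V (.) W are represented by finite lists of pairs
   (formal sums of simple tensors); equality in the tensor product is defined by the
   universal property (all bilinear maps into any vector space agree).  Quotients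
   by a subspace I of a tensor factor (used for C = A / A B_+) are handled by
   requiring the bilinear maps to vanish when that factor lies in I.
   Sweedler sums  Delta(a) = a_(1) (x) a_(2),  coactions  v_(0) (x) v_(1)  are
   given by representatives (lists). *)
From HB Require Import structures.
From mathcomp Require Import all_boot all_algebra.
From mathcomp Require Import complex reals.
Set Implicit Arguments. Unset Strict Implicit. Unset Printing Implicit Defensive.
Import GRing.Theory Num.Theory.
Local Open Scope ring_scope.

Section TensorDefs.
Variable K : numClosedFieldType.

Definition zeroP (U : lmodType K) (x : U) : Prop := x = 0.

Definition bilin (U1 U2 M : lmodType K) (f : U1 -> U2 -> M) : Prop :=
  (forall c x x' y, f (c *: x + x') y = c *: f x y + f x' y) /\
  (forall c x y y', f x (c *: y + y') = c *: f x y + f x y').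

Definition trilin (U1 U2 U3 M : lmodType K) (f : U1 -> U2 -> U3 -> M) : Prop :=
  (forall c x x' y z, f (c *: x + x') y z = c *: f x y z + f x' y z) /\
  (forall c x y y' z, f x (c *: y + y') z = c *: f x y z + f x y' z) /\
  (forall c x y z z', f x y (c *: z + z') = c *: f x y z + f x y z').

(* equality in U1 (.) (U2 / I2) of two formal sums of simple tensors *)
Definition tens2 (U1 U2 : lmodType K) (I2 : U2 -> Prop)
    (s t : seq (U1 * U2)) : Prop :=
  forall (M : lmodType K) (f : U1 -> U2 -> M), bilin f ->
    (forall x y, I2 y -> f x y = 0) ->
    \sum_(p <- s) f p.1 p.2 = \sum_(p <- t) f p.1 p.2.

(* equality in U1 (.) (U2 / I2) (.) (U3 / I3) *)
Definition tens3 (U1 U2 U3 : lmodType K) (I2 : U2 -> Prop) (I3 : U3 -> Prop)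
    (s t : seq (U1 * U2 * U3)) : Prop :=
  forall (M : lmodType K) (f : U1 -> U2 -> U3 -> M), trilin f ->
    (forall x y z, I2 y -> f x y z = 0) ->
    (forall x y z, I3 z -> f x y z = 0) ->
    \sum_(p <- s) f p.1.1 p.1.2 p.2 = \sum_(p <- t) f p.1.1 p.1.2 p.2.

Definition scale1 (U1 U2 : lmodType K) (c : K) (s : seq (U1 * U2)) :=
  [seq (c *: p.1, p.2) | p <- s].
Definition scale2 (U1 U2 : lmodType K) (c : K) (s : seq (U1 * U2)) :=
  [seq (p.1, c *: p.2) | p <- s].

(* pre-Hilbert space; inner product conjugate-linear in the first and linear in
   the second variable *)
Definition preHilbert (V : lmodType K) (ip : V -> V -> K) : Prop :=
  [/\ forall u c v w, ip u (c *: v + w) = c * ip u v + ip u w,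
      forall u v, ip u v = (ip v u)^*,
      forall v, 0 <= ip v v &
      forall v, ip v v = 0 -> v = 0].

Record isCQGHopfStar (A : algType K) (Delta : A -> seq (A * A)) (eps : A -> K)
    (S : A -> A) (st : A -> A) : Prop := {
  hD_lin : forall c a b,
    tens2 (@zeroP A) (Delta (c *: a + b)) (scale1 c (Delta a) ++ Delta b);
  hD_mul : forall a b, tens2 (@zeroP A) (Delta (a * b))
             [seq (p.1 * q.1, p.2 * q.2) | p <- Delta a, q <- Delta b];
  hD_one : tens2 (@zeroP A) (Delta 1) [:: (1, 1)];
  hD_coassoc : forall a, tens3 (@zeroP A) (@zeroP A)
             [seq (q.1, q.2, p.2) | p <- Delta a, q <- Delta p.1]
             [seq (p.1, q.1, q.2) | p <- Delta a, q <- Delta p.2];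
  he_lin : forall c a b, eps (c *: a + b) = c * eps a + eps b;
  he_mul : forall a b, eps (a * b) = eps a * eps b;
  he_one : eps 1 = 1;
  he_counitl : forall a, \sum_(p <- Delta a) eps p.1 *: p.2 = a;
  he_counitr : forall a, \sum_(p <- Delta a) eps p.2 *: p.1 = a;
  hS_lin : forall c a b, S (c *: a + b) = c *: S a + S b;
  hS_antipl : forall a, \sum_(p <- Delta a) S p.1 * p.2 = eps a *: 1;
  hS_antipr : forall a, \sum_(p <- Delta a) p.1 * S p.2 = eps a *: 1;
  hst_antilin : forall c a b, st (c *: a + b) = c^* *: st a + st b;
  hst_antimul : forall a b, st (a * b) = st b * st a;
  hst_invol : forall a, st (st a) = a;
  hD_star : forall a, tens2 (@zeroP A) (Delta (st a))
             [seq (st p.1, st p.2) | p <- Delta a];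
  hHaar : exists Phi : A -> K,
    [/\ forall c a b, Phi (c *: a + b) = c * Phi a + Phi b,
        Phi 1 = 1,
        forall a, 0 <= Phi (st a * a),
        forall a, \sum_(p <- Delta a) Phi p.1 *: p.2 = Phi a *: 1 &
        forall a, \sum_(p <- Delta a) Phi p.2 *: p.1 = Phi a *: 1]
}.

Definition isRightCoidealStarSubalg (A : algType K) (Delta : A -> seq (A * A))
    (st : A -> A) (B : A -> Prop) : Prop :=
  [/\ B 1,
      forall c a b, B a -> B b -> B (c *: a + b),
      forall a b, B a -> B b -> B (a * b),
      forall a, B a -> B (st a) &
      forall b, B b -> exists r : seq (A * A),
        tens2 (@zeroP A) (Delta b) r /\ {in r, forall p, B p.1}].

Definition ABplus (A : algType K) (eps : A -> K) (B : A -> Prop) (a : A) : Prop :=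
  exists r : seq (A * A), {in r, forall p, B p.2 /\ eps p.2 = 0} /\
                          a = \sum_(p <- r) p.1 * p.2.

(* V in _X Rep^Y, where X is a subalgebra of A given by a predicate, Y = A / I
   (I = zeroP for Y = A, I = A B_+ for Y = C).  act : A -> V -> V is the
   X-action (only its values on X matter); co v is a representative of
   v_(0) (x) v_(1) in V (.) Y. *)
Record isDKRep (A : algType K) (Delta : A -> seq (A * A)) (eps : A -> K)
    (S : A -> A) (st : A -> A) (X : A -> Prop) (I : A -> Prop)
    (V : lmodType K) (ip : V -> V -> K) (act : A -> V -> V)
    (co : V -> seq (V * A)) : Prop := {
  r_preHilbert : preHilbert ip;
  r_act_lin : forall x, X x -> forall c v w, act x (c *: v + w) = c *: act x v + act x w;
  r_act_linl : forall c x y v, X x -> X y -> act (c *: x + y) v = c *: act x v + act y v;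
  r_act_one : forall v, act 1 v = v;
  r_act_mul : forall x y v, X x -> X y -> act (x * y) v = act x (act y v);
  r_co_lin : forall c v w, tens2 I (co (c *: v + w)) (scale1 c (co v) ++ co w);
  r_co_counit : forall v, \sum_(p <- co v) eps p.2 *: p.1 = v;
  r_co_coassoc : forall v, tens3 I I
      [seq (q.1, q.2, p.2) | p <- co v, q <- co p.1]
      [seq (p.1, q.1, q.2) | p <- co v, q <- Delta p.2];
  r_compat : forall x, X x -> forall r : seq (A * A),
      tens2 (@zeroP A) (Delta x) r -> {in r, forall p, X p.1} ->
      forall v, tens2 I (co (act x v))
                        [seq (act p.1 q.1, p.2 * q.2) | p <- r, q <- co v];
  r_ip_act : forall x, X x -> forall v w, ip v (act x w) = ip (act (st x) v) w;
  r_ip_co : forall v w,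
      I (\sum_(p <- co w) ip v p.1 *: p.2 - \sum_(p <- co v) ip p.1 w *: st (S p.2))
}.

Definition ext2 (V W V' W' : Type) (T : V -> W -> seq (V' * W'))
    (s : seq (V * W)) : seq (V' * W') :=
  flatten [seq T p.1 p.2 | p <- s].

Definition ip2 (V W : lmodType K) (ipV : V -> V -> K) (ipW : W -> W -> K)
    (s t : seq (V * W)) : K :=
  \sum_(p <- s) \sum_(q <- t) ipV p.1 q.1 * ipW p.2 q.2.

Section Ind.
Variables (A : algType K) (V W : lmodType K).
Variables (actV : A -> V -> V) (coV : V -> seq (V * A))
          (actW : A -> W -> W) (coW : W -> seq (W * A)).

Definition actIndL (b : A) (s : seq (V * W)) : seq (V * W) :=
  [seq (actV b p.1, p.2) | p <- s].
Definition coIndL (s : seq (V * W)) : seq (V * W * A) :=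
  flatten [seq [seq (q.1, q'.1, q.2 * q'.2) | q <- coV p.1, q' <- coW p.2] | p <- s].

(* Ind^W(V); r is a representative of Delta(b) in B (.) A *)
Definition actIndR (r : seq (A * A)) (s : seq (V * W)) : seq (V * W) :=
  [seq (actV q.1 p.1, actW q.2 p.2) | p <- s, q <- r].
Definition coIndR (s : seq (V * W)) : seq (V * W * A) :=
  [seq (p.1, q.1, q.2) | p <- s, q <- coW p.2].
End Ind.

(* T ⊗ id applied to a formal sum in (V (.) W) (.) C *)
Definition ext3 (V W A : Type) (T : V -> W -> seq (V * W))
    (u : seq (V * W * A)) : seq (V * W * A) :=
  [seq (q.1, q.2, p.2) | p <- u, q <- T p.1.1 p.1.2].

End TensorDefs.

(* Main.v *)
Require Import Defs.
From HB Require Import structures.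
From mathcomp Require Import all_boot all_algebra.
From mathcomp Require Import complex reals.
Set Implicit Arguments. Unset Strict Implicit. Unset Printing Implicit Defensive.
Import GRing.Theory Num.Theory.
Local Open Scope ring_scope.

Section Aux.
Variable K : numClosedFieldType.

Definition islin (U M : lmodType K) (g : U -> M) :=
  forall c x y, g (c *: x + y) = c *: g x + g y.

Lemma islin0 (U M : lmodType K) (g : U -> M) : islin g -> g 0 = 0.
Proof.
move=> H; have E : g 0 = g 0 + g 0.
  by rewrite -{1}(addr0 0) -{1}(scale1r 0) H scale1r.
by have := congr1 (fun t => t - g 0) E; rewrite /= subrr addrK => <-.
Qed.

Lemma islinD (U M : lmodType K) (g : U -> M) : islin g -> forall x y, g (x + y) = g x + g y.
Proof. by move=> H x y; rewrite -{1}[x]scale1r H scale1r. Qed.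

Lemma islinZ (U M : lmodType K) (g : U -> M) : islin g -> forall c x, g (c *: x) = c *: g x.
Proof. by move=> H c x; rewrite -[c *: x]addr0 H islin0 // addr0. Qed.

Lemma islin_sum (U M : lmodType K) (g : U -> M) (I : Type) (r : seq I) (F : I -> U) :
  islin g -> g (\sum_(i <- r) F i) = \sum_(i <- r) g (F i).
Proof.
move=> H; elim: r => [|a r IH]; first by rewrite !big_nil islin0.
by rewrite !big_cons islinD // IH.
Qed.

Lemma bilin_l (U1 U2 M : lmodType K) (f : U1 -> U2 -> M) : bilin f -> forall y, islin (f^~ y).
Proof. by case=> H _ y c x x'; apply: H. Qed.
Lemma bilin_r (U1 U2 M : lmodType K) (f : U1 -> U2 -> M) : bilin f -> forall x, islin (f x).
Proof. by case=> _ H x c y y'; apply: H. Qed.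

Lemma bilin_0r (U1 U2 M : lmodType K) (f : U1 -> U2 -> M) : bilin f ->
  forall x y, zeroP y -> f x y = 0.
Proof. by move=> H x y ->; apply: islin0 (bilin_r H x). Qed.

Lemma trilin_0 (U1 U2 U3 M : lmodType K) (f : U1 -> U2 -> U3 -> M) : trilin f ->
  (forall x y z, zeroP y -> f x y z = 0) /\ (forall x y z, zeroP z -> f x y z = 0).
Proof.
case=> _ [H2 H3]; split=> x y z ->.
  have := @islin0 _ _ (fun y => f x y z); apply => c a b; apply: H2.
by have := @islin0 _ _ (f x y); apply => c a b; apply: H3.
Qed.

Lemma tens2_refl (U1 U2 : lmodType K) (I : U2 -> Prop) (s : seq (U1 * U2)) : tens2 I s s.
Proof. by []. Qed.

Lemma tens2_use (U1 U2 : lmodType K) (s t : seq (U1 * U2)) (M : lmodType K)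
  (f : U1 -> U2 -> M) : tens2 (@zeroP _ U2) s t -> bilin f ->
  \sum_(p <- s) f p.1 p.2 = \sum_(p <- t) f p.1 p.2.
Proof. by move=> H Hf; apply: H => //; apply: bilin_0r. Qed.

Lemma tens3_use (U1 U2 U3 : lmodType K) (s t : seq (U1 * U2 * U3)) (M : lmodType K)
  (f : U1 -> U2 -> U3 -> M) : tens3 (@zeroP _ U2) (@zeroP _ U3) s t -> trilin f ->
  \sum_(p <- s) f p.1.1 p.1.2 p.2 = \sum_(p <- t) f p.1.1 p.1.2 p.2.
Proof. by move=> H Hf; have [? ?] := trilin_0 Hf; apply: H. Qed.

Lemma sum_scale1 (U1 U2 M : lmodType K) (f : U1 -> U2 -> M) c s :
  bilin f -> \sum_(p <- scale1 c s) f p.1 p.2 = c *: \sum_(p <- s) f p.1 p.2.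
Proof.
move=> Hf; rewrite big_map scaler_sumr; apply: eq_bigr => p _.
by rewrite (islinZ (bilin_l Hf _)).
Qed.


Lemma islin_comp (U1 U2 M : lmodType K) (g : U2 -> M) (h : U1 -> U2) :
  islin g -> islin h -> islin (fun x => g (h x)).
Proof. by move=> Hg Hh c x y; rewrite Hh Hg. Qed.

Lemma bilin_compr (U1 U2 U3 M : lmodType K) (f : U1 -> U2 -> M) (h : U3 -> U2) :
  bilin f -> islin h -> bilin (fun x a => f x (h a)).
Proof.
move=> Hf Hh; split=> c x x' y; first by case: Hf => ->.
by rewrite Hh; case: Hf => _ ->.
Qed.

Lemma trilin_of (U1 U2 U3 U4 M : lmodType K) (f : U1 -> U2 -> M) (m : U3 -> U4 -> U2) :
  bilin f -> bilin m -> trilin (fun x y z => f x (m y z)).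
Proof.
move=> Hf Hm; split; first by move=> c x x' y z; case: Hf => ->.
split=> c x y y' z.
  by case: Hm => ->; case: Hf => _ ->.
by case: Hm => _ ->; case: Hf => _ ->.
Qed.

Lemma islin_sumF (U M : lmodType K) (I : Type) (r : seq I) (F : I -> U -> M) :
  (forall i, islin (F i)) -> islin (fun x => \sum_(i <- r) F i x).
Proof.
move=> H c x y; rewrite scaler_sumr -big_split; apply: eq_bigr => i _; apply: H.
Qed.

Lemma bilin_sumF (U1 U2 M : lmodType K) (I : Type) (r : seq I) (F : I -> U1 -> U2 -> M) :
  (forall i, bilin (F i)) -> bilin (fun x y => \sum_(i <- r) F i x y).
Proof.
move=> H; split=> c x x' y; rewrite scaler_sumr -big_split; apply: eq_bigr => i _;
  by case: (H i) => H1 H2; rewrite ?H1 ?H2.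
Qed.

Lemma trilin_sumF (U1 U2 U3 M : lmodType K) (I : Type) (r : seq I)
  (F : I -> U1 -> U2 -> U3 -> M) :
  (forall i, trilin (F i)) -> trilin (fun x y z => \sum_(i <- r) F i x y z).
Proof.
move=> H; split; last split; move=> c x y z t; rewrite scaler_sumr -big_split;
  apply: eq_bigr => i _; by case: (H i) => H1 [H2 H3]; rewrite ?H1 ?H2 ?H3.
Qed.

End Aux.
Section Main.
Variable K : numClosedFieldType.
Variables (A : algType K) (Delta : A -> seq (A * A)) (eps : A -> K) (S st : A -> A).
Hypothesis HA : isCQGHopfStar Delta eps S st.
Variables (B : A -> Prop) (V : lmodType K) (ipV : V -> V -> K) (actV : A -> V -> V)
  (coV : V -> seq (V * A)).
Hypothesis HV : isDKRep Delta eps S st B (@zeroP _ A) ipV actV coV.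
Variables (W : lmodType K) (ipW : W -> W -> K) (actW : A -> W -> W)
  (coW : W -> seq (W * A)).
Hypothesis HW : isDKRep Delta eps S st (fun _ => True) (ABplus eps B) ipW actW coW.

Definition TT (v : V) (w : W) := [seq (p.1, actW p.2 w) | p <- coV v].
Definition Ti (v : V) (w : W) := [seq (p.1, actW (S p.2) w) | p <- coV v].

Lemma actWl w : islin (actW^~ w).
Proof. by move=> c x y; apply: (r_act_linl HW). Qed.
Lemma actWr a : islin (actW a).
Proof. by move=> c x y; apply: (r_act_lin HW). Qed.
Lemma actW_mul a b w : actW (a * b) w = actW a (actW b w).
Proof. exact: (r_act_mul HW). Qed.
Lemma actW_one w : actW 1 w = w.
Proof. exact: (r_act_one HW). Qed.
Lemma S_lin : islin S.
Proof. exact: (hS_lin HA). Qed.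
Lemma mul_bilin : bilin (fun a b : A => a * b).
Proof.
split=> c x x' y; first by rewrite mulrDl -scalerAl.
by rewrite mulrDr scalerAr.
Qed.
Lemma Smul_bilin : bilin (fun a b : A => S a * b).
Proof.
split=> c x x' y; first by rewrite S_lin mulrDl -scalerAl.
by rewrite mulrDr scalerAr.
Qed.
Lemma mulS_bilin : bilin (fun a b : A => a * S b).
Proof.
split=> c x x' y; first by rewrite mulrDl -scalerAl.
by rewrite S_lin mulrDr scalerAr.
Qed.

Lemma sum_ext2 (M : nmodType)
  (Tm : V -> W -> seq (V * W)) (s : seq (V * W)) (h : V * W -> M) :
  \sum_(p <- ext2 Tm s) h p = \sum_(q <- s) \sum_(p <- Tm q.1 q.2) h p.
Proof. by rewrite /ext2 big_flatten big_map. Qed.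

Lemma coV_lin (M : lmodType K) (g : V -> A -> M) c v v' : bilin g ->
  \sum_(p <- coV (c *: v + v')) g p.1 p.2 =
  c *: \sum_(p <- coV v) g p.1 p.2 + \sum_(p <- coV v') g p.1 p.2.
Proof.
move=> Hg; rewrite (tens2_use (r_co_lin HV c v v') Hg) big_cat.
by rewrite sum_scale1.
Qed.

Lemma coV_counit (M : lmodType K) (f : V -> W -> M) v w : bilin f ->
  \sum_(p <- coV v) eps p.2 *: f p.1 w = f v w.
Proof.
move=> Hf; rewrite -{2}(r_co_counit HV v) (islin_sum _ _ (bilin_l Hf w)).
by apply: eq_bigr => p _; rewrite (islinZ (bilin_l Hf w)).
Qed.

Lemma coV_coassoc (M : lmodType K) (h : V -> A -> A -> M) v : trilin h ->
  \sum_(p <- coV v) \sum_(q <- coV p.1) h q.1 q.2 p.2 =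
  \sum_(p <- coV v) \sum_(q <- Delta p.2) h p.1 q.1 q.2.
Proof.
move=> Hh; have := tens3_use (r_co_coassoc HV v) Hh.
by rewrite !big_allpairs_dep.
Qed.


Lemma antip_l (M : lmodType K) (g : A -> M) (a : A) : islin g ->
  \sum_(q <- Delta a) g (S q.1 * q.2) = eps a *: g 1.
Proof.
move=> Hg; rewrite -(@islin_sum _ _ _ g _ (Delta a) (fun q => S q.1 * q.2) Hg).
by rewrite (hS_antipl HA) (islinZ Hg).
Qed.

Lemma antip_r (M : lmodType K) (g : A -> M) (a : A) : islin g ->
  \sum_(q <- Delta a) g (q.1 * S q.2) = eps a *: g 1.
Proof.
move=> Hg; rewrite -(@islin_sum _ _ _ g _ (Delta a) (fun q => q.1 * S q.2) Hg).
by rewrite (hS_antipr HA) (islinZ Hg).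
Qed.

Lemma TiT (M : lmodType K) (f : V -> W -> M) v w : bilin f ->
  \sum_(p <- TT v w) \sum_(q <- Ti p.1 p.2) f q.1 q.2 = f v w.
Proof.
move=> Hf; rewrite big_map /=.
under eq_bigr => p _ do rewrite big_map /=.
under eq_bigr => p _ do under eq_bigr => q _ do rewrite -actW_mul.
rewrite (coV_coassoc (h := fun x y z => f x (actW (S y * z) w))); last first.
  exact: (trilin_of (f := fun x a => f x (actW a w)) (bilin_compr Hf (actWl w)) Smul_bilin).
have E : forall p : V * A, \sum_(q <- Delta p.2) f p.1 (actW (S q.1 * q.2) w) = eps p.2 *: f p.1 w.
  move=> p; have := @antip_l _ (fun a => f p.1 (actW a w)) p.2.
  rewrite /= actW_one; apply; exact: islin_comp (bilin_r Hf _) (actWl w).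
under eq_bigr => p _ do rewrite E.
by rewrite coV_counit.
Qed.

Lemma TTi (M : lmodType K) (f : V -> W -> M) v w : bilin f ->
  \sum_(p <- Ti v w) \sum_(q <- TT p.1 p.2) f q.1 q.2 = f v w.
Proof.
move=> Hf; rewrite big_map /=.
under eq_bigr => p _ do rewrite big_map /=.
under eq_bigr => p _ do under eq_bigr => q _ do rewrite -actW_mul.
rewrite (coV_coassoc (h := fun x y z => f x (actW (y * S z) w))); last first.
  exact: (trilin_of (f := fun x a => f x (actW a w)) (bilin_compr Hf (actWl w)) mulS_bilin).
have E : forall p : V * A, \sum_(q <- Delta p.2) f p.1 (actW (q.1 * S q.2) w) = eps p.2 *: f p.1 w.
  move=> p; have := @antip_r _ (fun a => f p.1 (actW a w)) p.2.
  rewrite /= actW_one; apply; exact: islin_comp (bilin_r Hf _) (actWl w).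
under eq_bigr => p _ do rewrite E.
by rewrite coV_counit.
Qed.

Lemma T_lin1 c v v' w : tens2 (@zeroP _ W) (TT (c *: v + v') w) (scale1 c (TT v w) ++ TT v' w).
Proof.
move=> M f Hf _; rewrite big_cat sum_scale1 // !big_map /=.
exact: (coV_lin (g := fun x a => f x (actW a w)) c v v' (bilin_compr Hf (actWl w))).
Qed.

Lemma T_lin2 c v w w' : tens2 (@zeroP _ W) (TT v (c *: w + w')) (scale1 c (TT v w) ++ TT v w').
Proof.
move=> M f Hf _; rewrite big_cat sum_scale1 // !big_map /= scaler_sumr -big_split.
by apply: eq_bigr => p _ /=; rewrite (actWr p.2) (bilin_r Hf p.1).
Qed.

Lemma Ti_bilin (M : lmodType K) (f : V -> W -> M) : bilin f ->
  bilin (fun x y => \sum_(q <- Ti x y) f q.1 q.2).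
Proof.
move=> Hf; split=> c x x' y.
  rewrite /Ti !big_map /=.
  exact: (coV_lin (g := fun x a => f x (actW (S a) y)) c x x'
           (bilin_compr Hf (islin_comp (actWl y) S_lin))).
rewrite /Ti !big_map /= scaler_sumr -big_split.
by apply: eq_bigr => p _ /=; rewrite (actWr (S p.2)) (bilin_r Hf p.1).
Qed.

Lemma T_inj s t : tens2 (@zeroP _ W) (ext2 TT s) (ext2 TT t) -> tens2 (@zeroP _ W) s t.
Proof.
move=> H M f Hf _.
have G : forall u, \sum_(p <- u) f p.1 p.2 =
    \sum_(x <- ext2 TT u) \sum_(q <- Ti x.1 x.2) f q.1 q.2.
  by move=> u; rewrite sum_ext2; apply: eq_bigr => p _; rewrite TiT.
rewrite !G; exact: (tens2_use (f := fun x y => \sum_(q <- Ti x y) f q.1 q.2) H (Ti_bilin Hf)).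
Qed.

Lemma T_surj t : exists s, tens2 (@zeroP _ W) (ext2 TT s) t.
Proof.
exists (ext2 Ti t) => M f Hf _.
rewrite sum_ext2 (sum_ext2 Ti t (fun q => \sum_(p <- TT q.1 q.2) f p.1 p.2)).
by apply: eq_bigr => p _; rewrite TTi.
Qed.

Lemma T_act b : B b -> forall r : seq (A * A),
  tens2 (@zeroP _ A) (Delta b) r -> {in r, forall p, B p.1} ->
  forall s, tens2 (@zeroP _ W) (ext2 TT (actIndL actV b s))
                               (actIndR actV actW r (ext2 TT s)).
Proof.
move=> Bb r Hr Br s M f Hf _.
rewrite sum_ext2 /actIndL big_map /actIndR big_allpairs_dep.
rewrite (sum_ext2 TT s (fun p => \sum_(q <- r) f (actV q.1 p.1) (actW q.2 p.2))).
apply: eq_bigr => p _ /=; rewrite !big_map /=.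
rewrite (tens2_use (f := fun x a => f x (actW a p.2)) (r_compat HV Bb Hr Br p.1)
          (bilin_compr Hf (actWl p.2))).
rewrite big_allpairs_dep /= exchange_big /=.
by apply: eq_bigr => q _; apply: eq_bigr => d _; rewrite actW_mul.
Qed.

Lemma T_co s : tens3 (@zeroP _ W) (ABplus eps B)
                     (coIndR coW (ext2 TT s)) (ext3 TT (coIndL coV coW s)).
Proof.
move=> M h Hh H2 H3.
rewrite /coIndR big_allpairs_dep.
rewrite (sum_ext2 TT s (fun p => \sum_(q <- coW p.2) h p.1 q.1 q.2)).
rewrite /ext3 big_allpairs_dep /coIndL big_flatten big_map.
apply: eq_bigr => u _ /=; rewrite big_map /= big_allpairs_dep /=.
have E : forall a : V * A, \sum_(q <- coW (actW a.2 u.2)) h a.1 q.1 q.2 =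
   \sum_(d <- Delta a.2) \sum_(q' <- coW u.2) h a.1 (actW d.1 q'.1) (d.2 * q'.2).
  move=> a; transitivity (\sum_(p <- [seq (actW d.1 q'.1, d.2 * q'.2) | d <- Delta a.2, q' <- coW u.2]) h a.1 p.1 p.2); last by rewrite big_allpairs_dep.
  have Hc := r_compat HW (x := a.2) I (r := Delta a.2) (fun M f _ _ => erefl) (fun _ _ => I) u.2.
  apply: (Hc _ (fun y c => h a.1 y c)).
    by case: Hh => _ [H2' H3']; split=> c x x' y; rewrite ?H2' ?H3'.
  by move=> x y Hy; apply: H3.
under eq_bigr => a _ do rewrite E.
under [RHS]eq_bigr => q _ do under eq_bigr => e _ do rewrite big_map /=.
under [RHS]eq_bigr => q _ do rewrite exchange_big /=.
symmetry.
rewrite (coV_coassoc (h := fun x y z => \sum_(q' <- coW u.2) h x (actW y q'.1) (z * q'.2))) //.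
apply: trilin_sumF => q'.
case: Hh => H1' [H2' H3']; split; last split; move=> c x y z t.
- by rewrite H1'.
- by rewrite (actWl q'.1) H2'.
- by rewrite mulrDl -scalerAl H3'.
Qed.

Lemma ipV_lin u : islin (ipV u : V -> K^o).
Proof. by move=> c x y; case: (r_preHilbert HV) => H _ _ _; rewrite H. Qed.
Lemma ipW_lin u : islin (ipW u : W -> K^o).
Proof. by move=> c x y; case: (r_preHilbert HW) => H _ _ _; rewrite H. Qed.
Lemma ipV_sym u v : ipV u v = (ipV v u)^*.
Proof. by case: (r_preHilbert HV) => _ H _ _; rewrite H. Qed.
Lemma ipW_sym u v : ipW u v = (ipW v u)^*.
Proof. by case: (r_preHilbert HW) => _ H _ _; rewrite H. Qed.

Lemma ipW_actl x w u : ipW (actW x w) u = ipW w (actW (st x) u).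
Proof. by rewrite ipW_sym (r_ip_act HW) // -ipW_sym. Qed.
Lemma ipW_actst Y w u : ipW w (actW (st Y) u) = ipW (actW Y w) u.
Proof. by rewrite (r_ip_act HW) // (hst_invol HA). Qed.

Lemma ipV_co v w : \sum_(p <- coV w) ipV v p.1 *: p.2 =
                   \sum_(p <- coV v) ipV p.1 w *: st (S p.2).
Proof.
have := r_ip_co HV v w; rewrite /zeroP => /eqP; rewrite subr_eq0 => /eqP //.
Qed.

Lemma mull_lin (a : A) : islin (fun z : A => a * z).
Proof. by move=> c x y; rewrite mulrDr scalerAr. Qed.

Lemma ipprod_bilin (U : lmodType K) (v' : V) (w' : W) (h : U -> W) : islin h ->
  bilin (fun (x : V) (y : U) => (ipV v' x * ipW w' (h y) : K^o)).
Proof.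
move=> Hh; split=> c x x' y.
  by rewrite ipV_lin /GRing.scale /= mulrDl mulrA.
rewrite Hh ipW_lin /GRing.scale /= mulrDr.
by rewrite mulrCA.
Qed.

Lemma ip_simple v v' w w' :
  \sum_(a <- coV v) \sum_(b <- coV v') ipV a.1 b.1 * ipW (actW a.2 w) (actW b.2 w') =
  ipV v v' * ipW w w'.
Proof.
under eq_bigr => a _ do under eq_bigr => b _ do rewrite ipW_actl -actW_mul.
have E1 : forall a : V * A,
  \sum_(b <- coV v') ipV a.1 b.1 * ipW w (actW (st a.2 * b.2) w') =
  \sum_(c <- coV a.1) (ipV v' c.1 * ipW w' (actW (S c.2 * a.2) w))^*.
  move=> a.
  pose G := fun z : A => (ipW w (actW (st a.2 * z) w') : K^o).
  have HG : islin G.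
    apply: (islin_comp (ipW_lin w)); apply: (islin_comp (actWl w')); exact: mull_lin.
  transitivity (G (\sum_(b <- coV v') ipV a.1 b.1 *: b.2)).
    by rewrite (islin_sum _ _ HG); apply: eq_bigr => b _; rewrite (islinZ HG).
  rewrite ipV_co (islin_sum _ _ HG); apply: eq_bigr => c _; rewrite (islinZ HG).
  rewrite /G -(hst_antimul HA) ipW_actst.
  by rewrite (ipV_sym c.1 v') (ipW_sym _ w') rmorphM.
under eq_bigr => a _ do rewrite E1 -rmorph_sum.
rewrite -rmorph_sum.
rewrite (coV_coassoc (h := fun x y z => (ipV v' x * ipW w' (actW (S y * z) w) : K^o))); last first.
  have Hb := ipprod_bilin v' w' (actWl w).
  have := trilin_of Hb Smul_bilin. apply.
have E2 : forall a : V * A,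
  \sum_(q <- Delta a.2) (ipV v' a.1 * ipW w' (actW (S q.1 * q.2) w) : K^o) =
  eps a.2 *: (ipV v' a.1 * ipW w' w : K^o).
  move=> a; rewrite (antip_l (g := fun u => (ipV v' a.1 * ipW w' (actW u w) : K^o))).
    by rewrite actW_one.
  apply: (islin_comp (g := fun y => (ipV v' a.1 * ipW w' y : K^o))).
    by move=> c x y; rewrite ipW_lin /GRing.scale /= mulrDr mulrCA.
  exact: actWl.
under eq_bigr => a _ do rewrite E2.
rewrite (coV_counit (f := fun x y => (ipV v' x * ipW w' y : K^o))); last first.
  exact: (ipprod_bilin v' w' (h := id)).
by rewrite (ipV_sym v v') (ipW_sym w w') rmorphM.
Qed.

Lemma T_ip s t : ip2 ipV ipW (ext2 TT s) (ext2 TT t) = ip2 ipV ipW s t.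
Proof.
rewrite /ip2 sum_ext2; apply: eq_bigr => p _.
under eq_bigr => x _ do rewrite sum_ext2.
rewrite exchange_big /=; apply: eq_bigr => q _.
rewrite !big_map /=.
under eq_bigr => a _ do rewrite big_map /=.
exact: ip_simple.
Qed.

End Main.

Theorem mainTheorem7 (R : realType) (A : algType R[i])
  (Delta : A -> seq (A * A)) (eps : A -> R[i]) (S : A -> A) (st : A -> A)
  (HA : isCQGHopfStar Delta eps S st)
  (B : A -> Prop) (HB : isRightCoidealStarSubalg Delta st B)
  (V : lmodType R[i]) (ipV : V -> V -> R[i]) (actV : A -> V -> V)
  (coV : V -> seq (V * A))
  (HV : isDKRep Delta eps S st B (@zeroP _ A) ipV actV coV)
  (W : lmodType R[i]) (ipW : W -> W -> R[i]) (actW : A -> W -> W)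
  (coW : W -> seq (W * A))
  (HW : isDKRep Delta eps S st (fun _ => True) (ABplus eps B) ipW actW coW) :
  exists T : V -> W -> seq (V * W),
    [/\ (* T is linear V (.) W -> V (.) W *)
        (forall c v v' w, tens2 (@zeroP _ W) (T (c *: v + v') w)
                                 (scale1 c (T v w) ++ T v' w)) /\
        (forall c v w w', tens2 (@zeroP _ W) (T v (c *: w + w'))
                                 (scale1 c (T v w) ++ T v w')),
        (* T is bijective *)
        (forall s t, tens2 (@zeroP _ W) (ext2 T s) (ext2 T t) ->
                     tens2 (@zeroP _ W) s t) /\
        (forall t, exists s, tens2 (@zeroP _ W) (ext2 T s) t),
        (* T preserves the tensor product inner product *)
        (forall s t, ip2 ipV ipW (ext2 T s) (ext2 T t) = ip2 ipV ipW s t),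
        (* T intertwines the B-actions of _V Ind(W) and Ind^W(V) *)
        (forall b, B b -> forall r : seq (A * A),
           tens2 (@zeroP _ A) (Delta b) r -> {in r, forall p, B p.1} ->
           forall s, tens2 (@zeroP _ W) (ext2 T (actIndL actV b s))
                                        (actIndR actV actW r (ext2 T s))) &
        (* T intertwines the C-coactions *)
        (forall s, tens3 (@zeroP _ W) (ABplus eps B)
                     (coIndR coW (ext2 T s)) (ext3 T (coIndL coV coW s)))].
Proof.
exists (TT coV actW); split.
- split.
  + exact: (T_lin1 HV HW).
  + exact: (T_lin2 coV HW).
- split.
  + exact: (T_inj HA HV HW).
  + exact: (T_surj HA HV HW).
- exact: (T_ip HA HV HW).
- exact: (T_act HV HW).
- exact: (T_co HV HW).
Qed.
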